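(* Let $k\ge 5$ be an integer and let $H$ be a weighted graph with edge weight $\omega:E(H)\to\{3,4,5\}$. If $H$ contains no cycle of odd weight smaller than $2k+1$, then for every $u\in V(H)$ the set $N^{k-3}_\omega[u]$ is weighted bipartite.
   Context: The weight of a subgraph is the sum of the weights of its edges. The weighted distance $d_\omega(x,y)$ is the minimum weight of an $x,y$-path in $H$, and $N^i_\omega[u]=\{x\in V(H): d_\omega(x,u)\le i\}$. A vertex set $S$ is weighted bipartite if the induced subgraph $H[S]$ contains no cycle of odd weight. *)

(* Defs.v *)
From mathcomp Require Import all_boot.
Set Implicit Arguments. Unset Strict Implicit. Unset Printing Implicit Defensive.

Section WGraph.
Variables (T : finType) (e : rel T) (w : T -> T -> nat).

Definition simple_graph := symmetric e /\ irreflexive e.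
Definition weight_sym := forall x y, e x y -> w x y = w y x.

Definition seq_weight (s : seq T) : nat :=
  \sum_(p <- zip s (behead s)) w p.1 p.2.

Definition is_cycle (c : seq T) : bool := [&& 3 <= size c, cycle e c & uniq c].

Definition cycle_weight (c : seq T) : nat :=
  \sum_(p <- zip c (rot 1 c)) w p.1 p.2.

Definition is_path (x y : T) (p : seq T) : bool :=
  [&& path e x p, uniq (x :: p) & last x p == y].

(* d_w(x,u) <= i  iff  some x,u-path has weight <= i (d_w is a minimum) *)
Definition wdist_le (x u : T) (i : nat) : Prop :=
  exists p, is_path x u p /\ seq_weight (x :: p) <= i.

Definition in_wball (u : T) (i : nat) (x : T) : Prop := wdist_le x u i.

Definition weighted_bipartite (S : T -> Prop) : Prop :=
  forall c, is_cycle c -> (forall v, v \in c -> S v) -> ~~ odd (cycle_weight c).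
End WGraph.

(* Main.v *)
Require Import Defs.
From mathcomp Require Import all_boot zify.

Fixpoint wt {T : Type} (w : T -> T -> nat) (x : T) (p : seq T) : nat :=
  if p is y :: p' then w x y + wt w y p' else 0.

Lemma wt_cat {T : Type} (w : T -> T -> nat) x p q :
  wt w x (p ++ q) = wt w x p + wt w (last x p) q.
Proof. by elim: p x => [|y p IH] x //=; rewrite IH addnA. Qed.

Lemma sum_zip_wt {T : Type} (w : T -> T -> nat) x s :
  \sum_(pr <- zip (x :: s) s) w pr.1 pr.2 = wt w x s.
Proof.
elim: s x => [|y s IH] x; first by rewrite big_nil.
by rewrite /= big_cons IH.
Qed.

Lemma sum_zip_rcons {T : Type} (w : T -> T -> nat) x s t :
  \sum_(pr <- zip (x :: s) (rcons s t)) w pr.1 pr.2 = wt w x s + w (last x s) t.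
Proof.
elim: s x => [|y s IH] x; first by rewrite /= big_cons big_nil !addn0.
by rewrite /= big_cons IH addnA.
Qed.

Lemma cw_wt {T : finType} (w : T -> T -> nat) x q :
  cycle_weight w (x :: q) = wt w x (rcons q x).
Proof.
rewrite /cycle_weight rot1_cons sum_zip_rcons -cats1 wt_cat /=.
by rewrite addn0.
Qed.

Lemma split_nuniq (T : eqType) (s : seq T) : ~~ uniq s ->
  exists p1 y p3 p4, s = p1 ++ y :: p3 ++ y :: p4.
Proof.
elim: s => [|a s IH] //=.
rewrite negb_and negbK; case/orP => [Ha|Hs].
  case/splitPr: Ha => p3 p4. by exists [::], a, p3, p4.
have [p1 [y [p3 [p4 ->]]]] := IH Hs. by exists (a :: p1), y, p3, p4.
Qed.

Lemma rev_walk {T : finType} (e : rel T) (w : T -> T -> nat) :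
  symmetric e -> weight_sym e w -> forall q x, path e x q ->
  [/\ path e (last x q) (rev (belast x q)), last (last x q) (rev (belast x q)) = x
    & wt w (last x q) (rev (belast x q)) = wt w x q].
Proof.
move=> esym wsym; elim=> [|y q IH] x //=.
case/andP=> exy pq; have [p1 l1 w1] := IH y pq.
rewrite rev_cons rcons_path p1 l1 last_rcons -cats1 wt_cat /= w1 l1 addn0.
rewrite esym exy wsym; first by split=> //; rewrite addnC.
by rewrite esym.
Qed.

Lemma closed_walk {T : finType} (e : rel T) (w : T -> T -> nat) :
  simple_graph e -> weight_sym e w -> forall n x p, size p <= n ->
  path e x p -> last x p = x -> odd (wt w x p) ->
  exists c, [/\ is_cycle e c, odd (cycle_weight w c) & cycle_weight w c <= wt w x p].
Proof.
move=> [esym eirr] wsym; elim=> [|n IH] x p.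
  by rewrite leqn0 => /nilP -> .
move=> Hsz Hp Hl Ho.
case Hu: (uniq p).
  case/lastP: p Hsz Hp Hl Ho Hu => [|q y] //.
  rewrite last_rcons => _ Hp Hy; subst y => Ho Hu.
  exists (x :: q); rewrite cw_wt; split=> //.
  rewrite /is_cycle /= Hp /=.
  move: Hu; rewrite rcons_uniq => /andP[-> ->]; rewrite andbT.
  case: q Hp Ho => [|y [|z q]] //=.
    by rewrite eirr.
  move=> /andP [exy _]; rewrite addn0 wsym // oddD.
  by case: odd.
have [p1 [y [p3 [p4 Ep]]]] := split_nuniq _ p (negbT Hu).
subst p.
move: Hsz Hp Hl Ho; rewrite !size_cat /= size_cat /=.
rewrite !cat_path /= cat_path /= !last_cat /= last_cat /=.
rewrite !wt_cat /= wt_cat /=.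
move=> Hsz Hp Hl Ho.
case/and5P: Hp => P1 E1 P3 E3 P4.
have HA := IH x (p1 ++ y :: p4); have HB := IH y (p3 ++ [:: y]).
move: HA HB; rewrite !size_cat !cat_path !last_cat !wt_cat /= P1 E1 P3 E3 P4 Hl.
move=> HA HB.
case OA: (odd (wt w x p1 + (w (last x p1) y + wt w y p4))).
  have Hs1 : size p1 + (size p4).+1 <= n.
  clear -Hsz; move: Hsz; move: (size p1) (size p3) (size p4) => a b c; lia.
  have [c [c1 c2 c3]] := HA Hs1 erefl erefl OA.
  exists c; split=> //; lia.
have OB : odd (wt w y p3 + (w (last y p3) y)).
  move: Ho OA; rewrite !oddD. by do 5! case: odd.
have Hs3 : size p3 + 1 <= n by clear -Hsz; move: Hsz; move: (size p1) (size p3) (size p4) => a b c; lia.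
rewrite addn0 in HB; have [c [c1 c2 c3]] := HB Hs3 erefl erefl OB.
exists c; split=> //; lia.
Qed.

Lemma loop_walk {T : finType} (e : rel T) (w : T -> T -> nat) :
  simple_graph e -> weight_sym e w -> forall u x l pu qu,
  path e x l -> path e (last x l) pu -> last (last x l) pu = u ->
  path e x qu -> last x qu = u ->
  odd (wt w x l + wt w (last x l) pu + wt w x qu) ->
  exists c, [/\ is_cycle e c, odd (cycle_weight w c) &
     cycle_weight w c <= wt w x l + wt w (last x l) pu + wt w x qu].
Proof.
move=> Hs Hw u x l pu qu Pl Pu Lu Pq Lq Ho.
have [esym _] := Hs.
have [R1 R2 R3] := @rev_walk T e w esym Hw qu x Pq.
rewrite Lq in R1 R2 R3.
have := @closed_walk T e w Hs Hw _ x _ (leqnn (size (l ++ pu ++ rev (belast x qu)))).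
rewrite !cat_path !last_cat !wt_cat Pl Pu Lu R1 R2 R3 addnA.
by move=> /(_ isT erefl Ho).
Qed.

Theorem lemma4p1 (k : nat) (T : finType) (e : rel T) (w : T -> T -> nat) :
  5 <= k ->
  simple_graph e ->
  weight_sym e w ->
  (forall x y, e x y -> w x y \in [:: 3; 4; 5]) ->
  (forall c, is_cycle e c -> odd (cycle_weight w c) -> 2 * k + 1 <= cycle_weight w c) ->
  forall u : T, weighted_bipartite e w (in_wball e w u (k - 3)).
Proof.
move=> Hk Hs Hw Hw3 Hodd u c Hc Hin; apply/negP => Ho.
pose pathto v p := [&& path e v p, last v p == u & wt w v p <= k - 3].
have ball : forall v, v \in c -> exists p, pathto v p.
  move=> v /Hin [p [/and3P [P1 _ L1] W1]]; exists p.
  by rewrite /pathto P1 L1 -sum_zip_wt.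
have SP : forall v p1 p2, pathto v p1 -> pathto v p2 -> odd (wt w v p1) = odd (wt w v p2).
  move=> v p1 p2 /and3P [P1 /eqP L1 W1] /and3P [P2 /eqP L2 W2].
  case O: (odd (wt w v p1 + wt w v p2)).
    have := @loop_walk T e w Hs Hw u v [::] p1 p2 isT P1 L1 P2 L2.
    rewrite /= add0n => /(_ O) [c' [c1 c2 c3]].
    have := Hodd c' c1 c2; lia.
  by move: O; rewrite oddD; do 2! case: odd.
have TR : forall a b pa pb, e a b -> pathto a pa -> pathto b pb ->
    odd (w a b) = odd (wt w a pa) (+) odd (wt w b pb).
  move=> a b pa pb Eab /and3P [P1 /eqP L1 W1] /and3P [P2 /eqP L2 W2].
  have Wab : w a b <= 5.
    by move: (Hw3 a b Eab); rewrite !inE => /or3P [] /eqP ->.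
  case O: (odd (w a b + 0 + wt w b pb + wt w a pa)).
    have := @loop_walk T e w Hs Hw u a [:: b] pb pa.
    rewrite /= Eab => /(_ isT P2 L2 P1 L1 O) [c' [c1 c2 c3]].
    have := Hodd c' c1 c2; lia.
  by move: O; rewrite addn0 !oddD; do 3! case: odd.
have P : forall l x, path e x l -> {subset x :: l <= c} -> forall px pl,
    pathto x px -> pathto (last x l) pl ->
    odd (wt w x l) = odd (wt w x px) (+) odd (wt w (last x l) pl).
  elim=> [|y l IH] x /=.
    by move=> _ _ px pl H1 H2; rewrite (SP _ _ _ H1 H2) addbb.
  move=> /andP [Exy Pl] Hsub px pl H1 H2.
  have Hyc : y \in c by apply: Hsub; rewrite !inE eqxx orbT.
  have [py Hy] := ball y Hyc.
  have Hsub' : {subset y :: l <= c}.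
    by move=> v Hv; apply: Hsub; rewrite inE Hv orbT.
  rewrite oddD (IH y Pl Hsub' py pl Hy H2) (TR x y px py Exy H1 Hy).
  by do 3! case: odd.
case Ec: c Hc Ho => [|x q] // Hc Ho.
have Hxc : x \in c by rewrite Ec mem_head.
have [px Hx] := ball x Hxc.
have Pc : path e x (rcons q x) by case/and3P: Hc.
have := P (rcons q x) x Pc _ px px Hx.
rewrite last_rcons cw_wt in Ho * => /(_ _ Hx).
rewrite Ho addbb => H; suff Hs' : {subset x :: rcons q x <= c} by have := H Hs'.
by move=> v; rewrite Ec !inE mem_rcons !inE; case: (v == x).
Qed.
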